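(* Let $n\ge 2$ and let $v_1<\cdots<v_{n-1}$ be positive integers with $\mathrm{ML}(v_1,\ldots,v_{n-1})=L$. Let $t_1,\ldots,t_r$ be the (finitely many) times $t\in[0,1)$ at which $\Vert t v_i\Vert\ge L$ for all $1\le i\le n-1$. For each $j$, let $\rho_j$ be the largest index $i$ such that $t_j v_i$ has fractional part $L$, and let $\lambda_j$ be the largest index $i$ such that $t_j v_i$ has fractional part $1-L$. Define $\mu=\min_{1\le j\le r}\min\{\rho_j,\lambda_j\}$, and let $D$ be the least common multiple of the denominators of the $t_j$ written as reduced fractions. Then there is a constant $C$ (depending on $v_1,\ldots,v_{n-1}$) such that for every integer $v_n\ge C$ that is a multiple of $D$, $$\mathrm{ML}(v_1,\ldots,v_n)=\frac{v_n L}{v_n+v_\mu}.$$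
   Context: For a real number $x$, $\Vert x\Vert$ denotes the distance from $x$ to the nearest integer. For positive integers $v_1,\ldots,v_k$, the maximum loneliness is $\mathrm{ML}(v_1,\ldots,v_k)=\max_{t\in\mathbb{R}}\min_{1\le i\le k}\Vert t v_i\Vert$. *)

(* Defs.v *)
From Stdlib Require Import Reals ZArith Lra.
Open Scope R_scope.

(* fractional part {x} = x - floor x  (Int_part x = up x - 1 = floor x) *)
Definition frac (x : R) : R := x - IZR (Int_part x).

Definition dnorm (x : R) : R := Rmin (frac x) (1 - frac x).

(* min_{1 <= i <= k} ||t v_i||  (the empty minimum, k = 0, is set to 1;
   never used since k >= 1 below) *)
Fixpoint mint (v : nat -> nat) (k : nat) (t : R) : R :=
  match k with
  | O => 1
  | S k' => Rmin (mint v k' t) (dnorm (t * INR (v (S k'))))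
  end.

Definition is_ML (v : nat -> nat) (k : nat) (L : R) : Prop :=
  (exists t : R, mint v k t = L) /\ (forall t : R, mint v k t <= L).

Definition vext (v : nat -> nat) (n w : nat) : nat -> nat :=
  fun i => if Nat.eqb i n then w else v i.

Definition inT (v : nat -> nat) (k : nat) (L t : R) : Prop :=
  0 <= t < 1 /\ forall i : nat, (1 <= i <= k)%nat -> L <= dnorm (t * INR (v i)).

(* largest i in 1..k with P i (0 if none) *)
Fixpoint largest_idx (P : nat -> bool) (k : nat) : nat :=
  match k with
  | O => O
  | S k' => if P (S k') then S k' else largest_idx P k'
  end.

Definition Reqb (x y : R) : bool := if Req_EM_T x y then true else false.

Definition rho (v : nat -> nat) (k : nat) (L t : R) : nat :=
  largest_idx (fun i => Reqb (frac (t * INR (v i))) L) k.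
Definition lam (v : nat -> nat) (k : nat) (L t : R) : nat :=
  largest_idx (fun i => Reqb (frac (t * INR (v i))) (1 - L)) k.

Definition is_mu (v : nat -> nat) (k : nat) (L : R) (mu : nat) : Prop :=
  (exists t, inT v k L t /\ Nat.min (rho v k L t) (lam v k L t) = mu) /\
  (forall t, inT v k L t -> (mu <= Nat.min (rho v k L t) (lam v k L t))%nat).

Definition is_denom (t : R) (q : nat) : Prop :=
  (0 < q)%nat /\ exists p : Z, t = IZR p / INR q /\ Z.gcd p (Z.of_nat q) = 1%Z.

Definition is_lcm_denoms (v : nat -> nat) (k : nat) (L : R) (D : nat) : Prop :=
  (0 < D)%nat /\
  (forall t q, inT v k L t -> is_denom t q -> Nat.divide q D) /\
  (forall m, (0 < m)%nat ->
     (forall t q, inT v k L t -> is_denom t q -> Nat.divide q m) -> Nat.divide D m).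

(* Main.v *)
Require Import Defs.
From Stdlib Require Import Reals ZArith Lra Lia.
Open Scope R_scope.

Lemma Int_part_bnd x : IZR (Int_part x) <= x < IZR (Int_part x) + 1.
Proof. destruct (base_Int_part x). lra. Qed.

Lemma Int_part_uniq x m : IZR m <= x < IZR m + 1 -> Int_part x = m.
Proof.
  intros [H1 H2]. destruct (Int_part_bnd x) as [H3 H4].
  assert (IZR (Int_part x - m) < 1) by (rewrite minus_IZR; lra).
  assert (IZR (m - Int_part x) < 1) by (rewrite minus_IZR; lra).
  apply lt_IZR in H. apply lt_IZR in H0. lia.
Qed.

Lemma frac_shift m a : 0 <= a < 1 -> frac (IZR m + a) = a.
Proof.
  intros Ha. unfold frac. rewrite (Int_part_uniq (IZR m + a) m); lra.
Qed.

Lemma frac_range x : 0 <= frac x < 1.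
Proof. unfold frac. destruct (Int_part_bnd x). lra. Qed.

Lemma frac_decomp x : x = IZR (Int_part x) + frac x.
Proof. unfold frac. lra. Qed.

Lemma dnorm_shift m a : 0 <= a <= 1 -> dnorm (IZR m + a) = Rmin a (1 - a).
Proof.
  intros Ha. unfold dnorm. destruct (Req_dec a 1) as [E|E].
  - subst a. replace (IZR m + 1) with (IZR (m+1) + 0) by (rewrite plus_IZR; lra).
    rewrite frac_shift by lra. unfold Rmin; repeat destruct Rle_dec; lra.
  - rewrite frac_shift by lra. reflexivity.
Qed.

Lemma Rmin_bounds a b c : c <= a -> c <= b -> c <= Rmin a b.
Proof. unfold Rmin; destruct Rle_dec; lra. Qed.

Lemma dnorm_le x m : dnorm x <= Rabs (x - IZR m).
Proof.
  rewrite (frac_decomp x). set (I := Int_part x). set (a := frac x).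
  pose proof (frac_range x) as Ha. fold a in Ha.
  rewrite (dnorm_shift I a) by lra.
  destruct (Z_le_gt_dec 0 (I - m)) as [H|H].
  - apply IZR_le in H. rewrite minus_IZR in H.
    rewrite Rabs_right by lra. unfold Rmin; destruct Rle_dec; lra.
  - assert (I - m <= -1)%Z by lia. apply IZR_le in H0. rewrite minus_IZR in H0.
    rewrite Rabs_left by lra. unfold Rmin; destruct Rle_dec; lra.
Qed.

Lemma dnorm_attained x : exists m, dnorm x = Rabs (x - IZR m).
Proof.
  rewrite (frac_decomp x). set (I := Int_part x). set (a := frac x).
  pose proof (frac_range x) as Ha. fold a in Ha.
  rewrite (dnorm_shift I a) by lra.
  unfold Rmin; destruct Rle_dec.
  - exists I. rewrite Rabs_right; lra.
  - exists (I+1)%Z. rewrite plus_IZR. rewrite Rabs_left; lra.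
Qed.

Lemma dnorm_nonneg x : 0 <= dnorm x.
Proof. destruct (dnorm_attained x) as [m ->]. apply Rabs_pos. Qed.

Lemma dnorm_le_half x : dnorm x <= 1/2.
Proof.
  rewrite (frac_decomp x). pose proof (frac_range x).
  rewrite dnorm_shift by lra. unfold Rmin; destruct Rle_dec; lra.
Qed.

Lemma dnorm_lip x y : dnorm x <= dnorm y + Rabs (x - y).
Proof.
  destruct (dnorm_attained y) as [m Hm]. rewrite Hm.
  eapply Rle_trans. apply (dnorm_le x m).
  replace (x - IZR m) with ((y - IZR m) + (x - y)) by ring. apply Rabs_triang.
Qed.

Lemma dnorm_opp x : dnorm (- x) = dnorm x.
Proof.
  apply Rle_antisym.
  - destruct (dnorm_attained x) as [m Hm]. rewrite Hm.
    eapply Rle_trans. apply (dnorm_le (-x) (-m)). rewrite opp_IZR.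
    replace (- x - - IZR m) with (-(x - IZR m)) by ring. rewrite Rabs_Ropp; lra.
  - destruct (dnorm_attained (-x)) as [m Hm]. rewrite Hm.
    eapply Rle_trans. apply (dnorm_le x (-m)). rewrite opp_IZR.
    replace (x - - IZR m) with (-(-x - IZR m)) by ring. rewrite Rabs_Ropp; lra.
Qed.

Lemma dnorm_int_shift x m : dnorm (x + IZR m) = dnorm x.
Proof.
  rewrite (frac_decomp x). pose proof (frac_range x).
  replace (IZR (Int_part x) + frac x + IZR m) with (IZR (Int_part x + m) + frac x)
    by (rewrite plus_IZR; ring).
  rewrite !dnorm_shift by lra. reflexivity.
Qed.

Lemma dnorm_int m : dnorm (IZR m) = 0.
Proof.
  replace (IZR m) with (IZR m + 0) by ring. rewrite dnorm_shift by lra.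
  unfold Rmin; destruct Rle_dec; lra.
Qed.

Lemma frac_eq_iff x L : 0 <= L < 1 -> (frac x = L <-> exists m, x = IZR m + L).
Proof.
  intros HL. split.
  - intros H. exists (Int_part x). rewrite <- H. apply frac_decomp.
  - intros [m ->]. apply frac_shift; lra.
Qed.

Lemma dnorm_eq_cases x L : dnorm x = L -> exists m, x = IZR m + L \/ x = IZR m - L.
Proof.
  intros H. destruct (dnorm_attained x) as [m Hm]. exists m.
  rewrite H in Hm. unfold Rabs in Hm. destruct Rcase_abs; [right|left]; lra.
Qed.

Lemma mint_le v k t i : (1 <= i <= k)%nat -> mint v k t <= dnorm (t * INR (v i)).
Proof.
  induction k; intros Hi; [lia|]. simpl.
  destruct (Nat.eq_dec i (S k)) as [->|Hne].
  - apply Rmin_r.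
  - eapply Rle_trans. apply Rmin_l. apply IHk. lia.
Qed.

Lemma mint_ge v k t c : c <= 1 -> (forall i, (1 <= i <= k)%nat -> c <= dnorm (t * INR (v i))) ->
  c <= mint v k t.
Proof.
  intros Hc. induction k; intros H; simpl; [lra|].
  apply Rmin_bounds. apply IHk. intros; apply H; lia. apply H; lia.
Qed.

Lemma mint_gt v k t c : c < 1 -> (forall i, (1 <= i <= k)%nat -> c < dnorm (t * INR (v i))) ->
  c < mint v k t.
Proof.
  intros Hc. induction k; intros H; simpl; [lra|].
  unfold Rmin; destruct Rle_dec. apply IHk. intros; apply H; lia. apply H; lia.
Qed.

Lemma mint_ext v w k t : (forall i, (1 <= i <= k)%nat -> v i = w i) -> mint v k t = mint w k t.
Proof.
  induction k; intros H; simpl; auto. rewrite IHk by (intros; apply H; lia).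
  rewrite H by lia. reflexivity.
Qed.

Lemma mint_opp v k t : mint v k (- t) = mint v k t.
Proof.
  induction k; simpl; auto. rewrite IHk.
  replace (- t * INR (v (S k))) with (- (t * INR (v (S k)))) by ring.
  rewrite dnorm_opp. reflexivity.
Qed.

Lemma mint_shift v k t z : mint v k (t + IZR z) = mint v k t.
Proof.
  induction k; simpl; auto. rewrite IHk.
  replace ((t + IZR z) * INR (v (S k))) with (t * INR (v (S k)) + IZR (z * Z.of_nat (v (S k))))
    by (rewrite mult_IZR, <- INR_IZR_INZ; ring).
  rewrite dnorm_int_shift. reflexivity.
Qed.

Lemma Rmin_lip a b c d e : Rabs (a - c) <= e -> Rabs (b - d) <= e -> Rabs (Rmin a b - Rmin c d) <= e.
Proof.
  intros H1 H2. revert H1 H2. unfold Rabs; unfold Rmin; repeat destruct Rle_dec; repeat destruct Rcase_abs; lra.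
Qed.

Lemma dnorm_lip_abs x y : Rabs (dnorm x - dnorm y) <= Rabs (x - y).
Proof.
  apply Rabs_le. pose proof (dnorm_lip x y). pose proof (dnorm_lip y x).
  rewrite Rabs_minus_sym in H0. lra.
Qed.

Lemma mint_lip v k K t s : 0 <= K -> (forall i, (1 <= i <= k)%nat -> INR (v i) <= K) ->
  Rabs (mint v k t - mint v k s) <= K * Rabs (t - s).
Proof.
  intros HK. induction k; intros H; simpl.
  - rewrite Rminus_diag, Rabs_R0. pose proof (Rabs_pos (t - s)). nra.
  - apply Rmin_lip. apply IHk. intros; apply H; lia.
    eapply Rle_trans. apply dnorm_lip_abs.
    replace (t * INR (v (S k)) - s * INR (v (S k))) with ((t - s) * INR (v (S k))) by ring.
    rewrite Rabs_mult. rewrite (Rabs_right (INR _)) by (apply Rle_ge, pos_INR).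
    pose proof (Rabs_pos (t - s)). assert (INR (v (S k)) <= K) by (apply H; lia). nra.
Qed.

Lemma lip_cont (f : R -> R) K c : 0 <= K -> (forall t s, Rabs (f t - f s) <= K * Rabs (t - s)) ->
  continuity_pt f c.
Proof.
  intros HK H. unfold continuity_pt, continue_in, limit1_in, limit_in. intros eps Heps.
  exists (eps / (K + 1)). split. apply Rdiv_lt_0_compat; lra.
  intros x [_ Hx]. simpl in *. unfold R_dist in *.
  eapply Rle_lt_trans. apply H.
  apply Rle_lt_trans with ((K+1) * Rabs (x - c)).
  pose proof (Rabs_pos (x - c)); nra.
  apply Rmult_lt_reg_l with (/ (K+1)). apply Rinv_0_lt_compat; lra.
  rewrite <- Rmult_assoc, Rinv_l by lra. unfold Rdiv in Hx. lra.
Qed.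

Lemma bound_exists v k : exists K, 0 <= K /\ forall i, (1 <= i <= k)%nat -> INR (v i) <= K.
Proof.
  induction k. exists 0. split; [lra| intros; lia].
  destruct IHk as [K [H1 H2]]. exists (K + INR (v (S k))). pose proof (pos_INR (v (S k))).
  split. lra. intros i Hi. destruct (Nat.eq_dec i (S k)). subst; lra.
  assert (INR (v i) <= K) by (apply H2; lia). lra.
Qed.

Lemma mint_cont v k c : continuity_pt (mint v k) c.
Proof.
  destruct (bound_exists v k) as [K [H1 H2]].
  apply (lip_cont _ K); auto. intros; apply mint_lip; auto.
Qed.

Lemma mint_vext v n w t : (1 <= n)%nat ->
  mint (vext v n w) n t = Rmin (mint v (n - 1) t) (dnorm (t * INR w)).
Proof.
  intros Hn. destruct n as [|k]; [lia|]. simpl. rewrite Nat.sub_0_r.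
  unfold vext at 2. rewrite Nat.eqb_refl. f_equal. apply mint_ext.
  intros i Hi. unfold vext. destruct (Nat.eqb_spec i (S k)); [lia|auto].
Qed.

Lemma comb_nat (Q : nat -> nat -> Prop) N :
  (forall j, (j < N)%nat -> exists C, forall vn, (C <= vn)%nat -> Q j vn) ->
  exists C, forall vn, (C <= vn)%nat -> forall j, (j < N)%nat -> Q j vn.
Proof.
  induction N; intros H. exists 0%nat. intros; lia.
  destruct IHN as [C1 H1]. intros; apply H; lia.
  destruct (H N) as [C2 H2]. lia.
  exists (Nat.max C1 C2). intros vn Hv j Hj.
  destruct (Nat.eq_dec j N). subst; apply H2; lia. apply H1; lia.
Qed.

Lemma comb_real (Q : nat -> R -> Prop) N :
  (forall j, (j < N)%nat -> exists e, 0 < e /\ forall s, 0 < s <= e -> Q j s) ->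
  exists e, 0 < e /\ forall s, 0 < s <= e -> forall j, (j < N)%nat -> Q j s.
Proof.
  induction N; intros H. exists 1. split; [lra|]. intros; lia.
  destruct IHN as [e1 [He1 H1]]. intros; apply H; lia.
  destruct (H N) as [e2 [He2 H2]]. lia.
  exists (Rmin e1 e2). split. unfold Rmin; destruct Rle_dec; lra.
  intros s Hs j Hj. pose proof (Rmin_l e1 e2). pose proof (Rmin_r e1 e2).
  destruct (Nat.eq_dec j N). subst; apply H2; lra. apply H1; [lra|lia].
Qed.

Lemma nat_above (X : R) : exists N : nat, forall vn, (N <= vn)%nat -> X <= INR vn.
Proof.
  destruct (INR_archimed 1 X) as [N HN]. lra. exists N. intros vn Hv.
  apply le_INR in Hv. lra.
Qed.

Lemma Reqb_true x y : Reqb x y = true <-> x = y.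
Proof. unfold Reqb. destruct Req_EM_T; split; congruence. Qed.

Lemma largest_idx_spec P k :
  (largest_idx P k <= k)%nat /\
  ((1 <= largest_idx P k)%nat -> P (largest_idx P k) = true) /\
  (forall i, (largest_idx P k < i <= k)%nat -> P i = false).
Proof.
  induction k; simpl. split; [lia|]. split; [lia|]. intros; lia.
  destruct (P (S k)) eqn:E. split; [lia|]. split; auto. intros; lia.
  destruct IHk as [H1 [H2 H3]]. split; [lia|]. split; auto.
  intros i Hi. destruct (Nat.eq_dec i (S k)). subst; auto. apply H3; lia.
Qed.

Lemma largest_idx_ext P Q k : (forall i, (1 <= i <= k)%nat -> P i = Q i) ->
  largest_idx P k = largest_idx Q k.
Proof.
  induction k; intros H; simpl; auto. rewrite H by lia. rewrite IHk by (intros; apply H; lia).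
  reflexivity.
Qed.

Lemma largest_idx_pos P k i : (1 <= i <= k)%nat -> P i = true -> (1 <= largest_idx P k)%nat.
Proof.
  intros Hi HP. destruct (largest_idx_spec P k) as [H1 [H2 H3]].
  destruct (Nat.eq_dec (largest_idx P k) 0); [|lia].
  rewrite H3 in HP. discriminate. lia.
Qed.

Lemma dnorm_move x s : dnorm x - Rabs s <= dnorm (x - s).
Proof.
  pose proof (dnorm_lip x (x - s)). replace (x - (x - s)) with s in H by ring. lra.
Qed.

Lemma per_index_left t0 vi L : 0 < vi -> 0 < L <= 1/2 -> L <= dnorm (t0 * vi) ->
  ~ (exists m, t0 * vi = IZR m + L) ->
  exists e, 0 < e /\ forall s, 0 < s <= e -> L < dnorm ((t0 - s) * vi).
Proof.
  intros Hv HL Hd Hno. destruct (Rle_lt_or_eq_dec _ _ Hd) as [Hlt|Heq].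
  - exists ((dnorm (t0 * vi) - L) / (2 * vi)). split. apply Rdiv_lt_0_compat; lra.
    intros s Hs. pose proof (dnorm_move (t0 * vi) (s * vi)).
    replace ((t0 - s) * vi) with (t0 * vi - s * vi) by ring.
    rewrite Rabs_right in H by nra.
    assert (s * vi <= (dnorm (t0 * vi) - L) / 2).
    { destruct Hs as [_ Hs]. apply Rmult_le_compat_r with (r := vi) in Hs; [|lra].
      unfold Rdiv in Hs. field_simplify in Hs; lra. }
    lra.
  - symmetry in Heq. destruct (dnorm_eq_cases _ _ Heq) as [m [Hm|Hm]].
    + exfalso; apply Hno; eauto.
    + assert (L < 1/2).
      { destruct (Req_dec L (1/2)); [|lra]. exfalso. apply Hno. exists (m - 1)%Z.
        rewrite minus_IZR. lra. }
      exists ((1 - 2 * L) / (2 * vi)). split. apply Rdiv_lt_0_compat; lra.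
      intros s Hs. assert (s * vi <= (1 - 2 * L) / 2).
      { destruct Hs as [_ Hs]. apply Rmult_le_compat_r with (r := vi) in Hs; [|lra].
        unfold Rdiv in Hs. field_simplify in Hs; lra. }
      replace ((t0 - s) * vi) with (IZR (m - 1) + (1 - L - s * vi))
        by (rewrite minus_IZR; lra).
      assert (0 < s * vi) by nra.
      rewrite dnorm_shift by lra. unfold Rmin; destruct Rle_dec; lra.
Qed.

Lemma maxside v k L t0 :
  (forall i, (1 <= i <= k)%nat -> (0 < v i)%nat) ->
  0 < L <= 1/2 -> (forall t, mint v k t <= L) -> mint v k t0 = L ->
  exists i, (1 <= i <= k)%nat /\ exists m, t0 * INR (v i) = IZR m + L.
Proof.
  intros Hpos HL Hmax Ht0.
  destruct (Classical_Prop.classic (exists i, (1 <= i <= k)%nat /\ exists m, t0 * INR (v i) = IZR m + L))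
    as [H|H]; auto. exfalso.
  destruct (comb_real (fun j s => L < dnorm ((t0 - s) * INR (v (S j)))) k) as [e [He Hall]].
  { intros j Hj. apply per_index_left.
    apply lt_0_INR; apply Hpos; lia. auto. rewrite <- Ht0; apply mint_le; lia.
    intros Hex. apply H. exists (S j). split; [lia|auto]. }
  assert (L < mint v k (t0 - e)).
  { apply mint_gt. lra. intros i Hi. destruct i; [lia|]. apply Hall; [lra|lia]. }
  specialize (Hmax (t0 - e)). lra.
Qed.

Lemma maxside_r v k L t0 :
  (forall i, (1 <= i <= k)%nat -> (0 < v i)%nat) ->
  0 < L <= 1/2 -> (forall t, mint v k t <= L) -> mint v k t0 = L ->
  exists i, (1 <= i <= k)%nat /\ exists m, t0 * INR (v i) = IZR m + (1 - L).
Proof.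
  intros Hpos HL Hmax Ht0.
  destruct (maxside v k L (- t0) Hpos HL Hmax) as [i [Hi [m Hm]]].
  rewrite mint_opp; auto.
  exists i. split; auto. exists (- m - 1)%Z. rewrite minus_IZR, opp_IZR. lra.
Qed.

Lemma mono_le v k i j : (forall i j, (1 <= i)%nat -> (i < j)%nat -> (j <= k)%nat -> (v i < v j)%nat) ->
  (1 <= i)%nat -> (i <= j)%nat -> (j <= k)%nat -> (v i <= v j)%nat.
Proof.
  intros H Hi Hij Hj. destruct (Nat.eq_dec i j). subst; lia.
  specialize (H i j Hi ltac:(lia) Hj). lia.
Qed.

Lemma L_bounds v k L : (1 <= k)%nat ->
  (forall i, (1 <= i <= k)%nat -> (0 < v i)%nat) ->
  (forall i j, (1 <= i)%nat -> (i < j)%nat -> (j <= k)%nat -> (v i < v j)%nat) ->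
  is_ML v k L -> 1 / (2 * INR (v k)) <= L /\ L <= 1/2.
Proof.
  intros Hk Hpos Hmono [[t0 Ht0] Hmax]. split.
  - set (V := INR (v k)). assert (HV : 1 <= V).
    { unfold V. apply (le_INR 1). apply Hpos. lia. }
    eapply Rle_trans; [|apply (Hmax (1 / (2 * V)))].
    apply mint_ge. apply Rle_trans with 1; [|lra]. unfold Rdiv. rewrite Rmult_1_l.
    rewrite <- Rinv_1. apply Rinv_le_contravar; lra.
    intros i Hi. set (a := 1 / (2 * V) * INR (v i)).
    assert (Hvi : 1 <= INR (v i) <= V).
    { split. apply (le_INR 1). apply Hpos; lia. apply le_INR. apply (mono_le v k); auto; lia. }
    assert (Ha : 1 / (2 * V) <= a <= 1/2).
    { unfold a. split.
      - pose proof (Rinv_0_lt_compat (2*V) ltac:(lra)). unfold Rdiv. nra.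
      - unfold a. replace (1 / (2 * V) * INR (v i)) with (INR (v i) / V * (1/2)) by (field; lra).
        assert (INR (v i) / V <= 1). { apply Rmult_le_reg_r with V. lra. unfold Rdiv. rewrite Rmult_assoc, Rinv_l by lra. lra. }
        assert (0 <= INR (v i) / V) by (unfold Rdiv; apply Rmult_le_pos; [lra| left; apply Rinv_0_lt_compat; lra]). nra. }
    assert (1 / (2 * V) <= 1/2).
    { unfold Rdiv. rewrite !Rmult_1_l. apply Rinv_le_contravar; lra. }
    assert (0 < 1 / (2 * V)) by (apply Rdiv_lt_0_compat; lra).
    replace a with (IZR 0 + a) by (simpl; ring). rewrite dnorm_shift by lra.
    apply Rmin_bounds; lra.
  - rewrite <- Ht0. destruct k; [lia|]. simpl. eapply Rle_trans. apply Rmin_r. apply dnorm_le_half.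
Qed.

Lemma rat_int m0 p q0 D vn : (0 < q0)%nat -> m0 * INR q0 = IZR p ->
  (forall q, is_denom m0 q -> Nat.divide q D) -> Nat.divide D vn ->
  exists z, m0 * INR vn = IZR z.
Proof.
  intros Hq0 Hm HD Hvn.
  set (Q := Z.of_nat q0). assert (HQ : (0 < Q)%Z) by (unfold Q; lia).
  set (g := Z.gcd p Q).
  destruct (Z.gcd_divide_l p Q) as [p' Hp']. destruct (Z.gcd_divide_r p Q) as [q' Hq'].
  fold g in Hp', Hq'.
  assert (Hg : (0 < g)%Z).
  { pose proof (Z.gcd_nonneg p Q). fold g in H. destruct (Z.eq_dec g 0); [|lia].
    apply Z.gcd_eq_0 in e. lia. }
  assert (Hq'pos : (0 < q')%Z) by nia.
  assert (Hgcd : Z.gcd p' q' = 1%Z).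
  { pose proof (Z.gcd_mul_mono_r p' q' g). rewrite <- Hp', <- Hq' in H. fold g in H.
    rewrite Z.abs_eq in H by lia. pose proof (Z.gcd_nonneg p' q'). nia. }
  set (q := Z.to_nat q').
  assert (Hqq : Z.of_nat q = q') by (unfold q; apply Z2Nat.id; lia).
  assert (HINRq : INR q = IZR q') by (rewrite INR_IZR_INZ, Hqq; reflexivity).
  assert (Hm0 : m0 = IZR p' / INR q).
  { rewrite HINRq. assert (INR q0 = IZR g * IZR q').
    { rewrite INR_IZR_INZ, <- mult_IZR. fold Q. rewrite Hq'. f_equal; ring. }
    assert (0 < IZR q') by (apply IZR_lt; lia). assert (0 < IZR g) by (apply IZR_lt; lia).
    rewrite H in Hm. rewrite Hp', mult_IZR in Hm. field_simplify_eq; [|lra].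
    apply Rmult_eq_reg_r with (IZR g); [|lra]. lra. }
  assert (Hden : is_denom m0 q).
  { split. lia. exists p'. split; auto. rewrite Hqq; auto. }
  destruct (Nat.divide_trans _ _ _ (HD q Hden) Hvn) as [c Hc].
  exists (p' * Z.of_nat c)%Z. rewrite Hc, mult_INR, Hm0, mult_IZR, <- INR_IZR_INZ.
  field. rewrite HINRq. apply not_0_IZR. lia.
Qed.

Lemma div_le_of a b c : 0 < c -> a <= b * c -> a / c <= b.
Proof.
  intros Hc H. apply Rmult_le_reg_r with c; auto. unfold Rdiv.
  rewrite Rmult_assoc, Rinv_l by lra. lra.
Qed.

Lemma le_div_of a b c : 0 < c -> a * c <= b -> a <= b / c.
Proof.
  intros Hc H. apply Rmult_le_reg_r with c; auto. unfold Rdiv.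
  rewrite Rmult_assoc, Rinv_l by lra. lra.
Qed.

Lemma rho_props v k L t0 : 0 < L <= 1/2 ->
  (forall i, (1 <= i <= k)%nat -> (0 < v i)%nat) -> (forall t, mint v k t <= L) -> mint v k t0 = L ->
  let r := rho v k L t0 in
  (1 <= r <= k)%nat /\ (exists m, t0 * INR (v r) = IZR m + L) /\
  (forall i, (r < i <= k)%nat -> ~ exists m, t0 * INR (v i) = IZR m + L).
Proof.
  intros HL Hpos Hmax Ht0 r.
  destruct (largest_idx_spec (fun i => Reqb (frac (t0 * INR (v i))) L) k) as [H1 [H2 H3]].
  fold (rho v k L t0) in H1, H2, H3. fold r in H1, H2, H3.
  assert (Hr : (1 <= r)%nat).
  { destruct (maxside v k L t0 Hpos ltac:(lra) Hmax Ht0) as [i [Hi Hm]].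
    unfold r, rho. apply (largest_idx_pos _ _ i Hi). apply Reqb_true.
    apply (frac_eq_iff _ L ltac:(lra)); eauto. }
  split; [lia|]. split.
  - apply (frac_eq_iff _ L ltac:(lra)). apply Reqb_true. auto.
  - intros i Hi Hex. apply (frac_eq_iff _ L ltac:(lra)) in Hex. apply Reqb_true in Hex.
    rewrite H3 in Hex; [discriminate|lia].
Qed.

Lemma lam_props v k L t0 : 0 < L <= 1/2 ->
  (forall i, (1 <= i <= k)%nat -> (0 < v i)%nat) -> (forall t, mint v k t <= L) -> mint v k t0 = L ->
  let l := lam v k L t0 in
  (1 <= l <= k)%nat /\ (exists m, t0 * INR (v l) = IZR m + (1 - L)) /\
  (forall i, (l < i <= k)%nat -> ~ exists m, t0 * INR (v i) = IZR m + (1 - L)).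
Proof.
  intros HL Hpos Hmax Ht0 l.
  destruct (largest_idx_spec (fun i => Reqb (frac (t0 * INR (v i))) (1 - L)) k) as [H1 [H2 H3]].
  fold (lam v k L t0) in H1, H2, H3. fold l in H1, H2, H3.
  assert (Hr : (1 <= l)%nat).
  { destruct (maxside_r v k L t0 Hpos ltac:(lra) Hmax Ht0) as [i [Hi Hm]].
    unfold l, lam. apply (largest_idx_pos _ _ i Hi). apply Reqb_true.
    apply (frac_eq_iff _ (1 - L) ltac:(lra)); eauto. }
  split; [lia|]. split.
  - apply (frac_eq_iff _ (1 - L) ltac:(lra)). apply Reqb_true. auto.
  - intros i Hi Hex. apply (frac_eq_iff _ (1 - L) ltac:(lra)) in Hex. apply Reqb_true in Hex.
    rewrite H3 in Hex; [discriminate|lia].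
Qed.

Lemma inT_mint v k L t : L <= 1 -> (forall t, mint v k t <= L) -> inT v k L t -> mint v k t = L.
Proof.
  intros HL Hmax [_ H]. apply Rle_antisym; auto. apply mint_ge; auto.
Qed.

Lemma Tpoint_int v k L D t0 vn : 0 < L <= 1/2 ->
  (forall i, (1 <= i <= k)%nat -> (0 < v i)%nat) -> (forall t, mint v k t <= L) ->
  is_lcm_denoms v k L D -> inT v k L t0 -> Nat.divide D vn ->
  exists z, t0 * INR vn = IZR z.
Proof.
  intros HL Hpos Hmax [_ [HD _]] HT Hvn.
  assert (Ht0 : mint v k t0 = L) by (apply inT_mint; auto; lra).
  destruct (maxside v k L t0 Hpos HL Hmax Ht0) as [r [Hr [m1 Hm1]]].
  destruct (maxside_r v k L t0 Hpos HL Hmax Ht0) as [l [Hl [m2 Hm2]]].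
  apply (rat_int t0 (m1 + m2 + 1) (v r + v l) D vn).
  - specialize (Hpos r Hr). lia.
  - rewrite plus_INR, !plus_IZR. lra.
  - intros q Hq. apply (HD t0 q HT Hq).
  - auto.
Qed.

Lemma local_up a b x L vr vn : 0 < vr -> 0 <= vn -> 0 < L -> 0 <= x -> x * vr <= L ->
  a <= Rabs (L - x * vr) -> b <= x * vn -> Rmin a b <= vn * L / (vn + vr).
Proof.
  intros Hvr Hvn HL Hx Hxv Ha Hb. rewrite Rabs_right in Ha by lra.
  destruct (Rle_lt_dec (x * (vn + vr)) L) as [H|H].
  - eapply Rle_trans. apply Rmin_r. eapply Rle_trans. apply Hb.
    apply le_div_of. lra. nra.
  - eapply Rle_trans. apply Rmin_l. eapply Rle_trans. apply Ha.
    apply le_div_of. lra. nra.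
Qed.

Lemma M_mono vn L a b : 0 <= vn -> 0 <= L -> 0 < a <= b -> vn * L / (vn + b) <= vn * L / (vn + a).
Proof.
  intros. unfold Rdiv. apply Rmult_le_compat_l. nra.
  apply Rinv_le_contravar; lra.
Qed.

Lemma per_index_lower t0 vi vr L : 0 < vi -> 0 < vr -> 0 < L <= 1/2 ->
  L <= dnorm (t0 * vi) ->
  (vr < vi -> ~ exists m, t0 * vi = IZR m + L) ->
  exists C : nat, forall vn : nat, (C <= vn)%nat ->
    INR vn * L / (INR vn + vr) <= dnorm ((t0 - L / (INR vn + vr)) * vi).
Proof.
  intros Hvi Hvr HL Hd Hno.
  assert (Hgen : forall vn : nat, 0 < INR vn + vr /\ 0 < L / (INR vn + vr) /\
     INR vn * L / (INR vn + vr) = L - L / (INR vn + vr) * vr).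
  { intros vn. pose proof (pos_INR vn). split. lra. split. apply Rdiv_lt_0_compat; lra.
    field. lra. }
  destruct (Rle_lt_dec vi vr) as [Hle|Hlt].
  - exists 0%nat. intros vn _. destruct (Hgen vn) as [H1 [H2 H3]]. rewrite H3.
    pose proof (dnorm_move (t0 * vi) (L / (INR vn + vr) * vi)).
    rewrite Rabs_right in H by nra.
    replace ((t0 - L / (INR vn + vr)) * vi) with (t0 * vi - L / (INR vn + vr) * vi) by ring.
    nra.
  - specialize (Hno Hlt).
    assert (HM : forall vn, INR vn * L / (INR vn + vr) <= L).
    { intros vn. destruct (Hgen vn) as [H1 [H2 H3]]. rewrite H3. nra. }
    destruct (Rle_lt_or_eq_dec _ _ Hd) as [Hgt|Heq].
    + set (g := dnorm (t0 * vi) - L).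
      destruct (nat_above (L * vi / g)) as [C HC]. exists C. intros vn Hvn.
      specialize (HC vn Hvn). destruct (Hgen vn) as [H1 [H2 H3]].
      assert (L / (INR vn + vr) * vi <= g).
      { unfold Rdiv. rewrite Rmult_assoc, (Rmult_comm (/ _)), <- Rmult_assoc.
        apply div_le_of. lra.
        assert (L * vi <= INR vn * g).
        { apply (Rmult_le_compat_r g) in HC; [|unfold g; lra]. unfold Rdiv in HC.
          rewrite Rmult_assoc, Rinv_l in HC by (unfold g; lra). lra. }
        assert (0 <= g) by (unfold g; lra). nra. }
      pose proof (dnorm_move (t0 * vi) (L / (INR vn + vr) * vi)).
      rewrite Rabs_right in H0 by nra.
      replace ((t0 - L / (INR vn + vr)) * vi) with (t0 * vi - L / (INR vn + vr) * vi) by ring.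
      specialize (HM vn). unfold g in H. lra.
    + symmetry in Heq. destruct (dnorm_eq_cases _ _ Heq) as [m [Hm|Hm]].
      * exfalso; apply Hno; eauto.
      * assert (HL2 : L < 1/2).
        { destruct (Req_dec L (1/2)); [|lra]. exfalso. apply Hno. exists (m - 1)%Z.
          rewrite minus_IZR. lra. }
        set (g := 1 - 2 * L).
        destruct (nat_above (L * vi / g)) as [C HC]. exists C. intros vn Hvn.
        specialize (HC vn Hvn). destruct (Hgen vn) as [H1 [H2 H3]].
        assert (L / (INR vn + vr) * vi <= g).
        { unfold Rdiv. rewrite Rmult_assoc, (Rmult_comm (/ _)), <- Rmult_assoc.
          apply div_le_of. lra.
          assert (L * vi <= INR vn * g).
          { apply (Rmult_le_compat_r g) in HC; [|unfold g; lra]. unfold Rdiv in HC.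
            rewrite Rmult_assoc, Rinv_l in HC by (unfold g; lra). lra. }
          assert (0 <= g) by (unfold g; lra). nra. }
        set (s := L / (INR vn + vr)) in *.
        replace ((t0 - s) * vi) with (IZR (m - 1) + (1 - L - s * vi))
          by (rewrite minus_IZR; lra).
        assert (0 < s * vi) by nra. unfold g in H.
        rewrite dnorm_shift by lra. specialize (HM vn).
        apply Rmin_bounds; lra.
Qed.

Lemma lower_core v k L t0 r :
  (forall i, (1 <= i <= k)%nat -> (0 < v i)%nat) -> 0 < L <= 1/2 -> (1 <= r <= k)%nat ->
  (forall i, (1 <= i <= k)%nat -> L <= dnorm (t0 * INR (v i))) ->
  (forall i, (1 <= i <= k)%nat -> (v r < v i)%nat -> ~ exists m, t0 * INR (v i) = IZR m + L) ->
  exists C, forall vn, (C <= vn)%nat -> (exists z, t0 * INR vn = IZR z) ->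
   Rmin (mint v k (t0 - L / (INR vn + INR (v r))))
        (dnorm ((t0 - L / (INR vn + INR (v r))) * INR vn)) = INR vn * L / (INR vn + INR (v r)).
Proof.
  intros Hpos HL Hr Hd Hno.
  assert (Hvr : 0 < INR (v r)) by (apply lt_0_INR; apply Hpos; lia).
  destruct (comb_nat (fun j vn => INR vn * L / (INR vn + INR (v r)) <=
                        dnorm ((t0 - L / (INR vn + INR (v r))) * INR (v (S j)))) k) as [C HC].
  { intros j Hj. apply per_index_lower; auto.
    apply lt_0_INR; apply Hpos; lia. apply Hd; lia.
    intros Hlt. apply Hno. lia. apply INR_lt; auto. }
  exists C. intros vn Hvn [z Hz].
  pose proof (pos_INR vn) as Hvn0.
  set (s := L / (INR vn + INR (v r))).
  set (M := INR vn * L / (INR vn + INR (v r))).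
  assert (HsM : s * INR vn = M) by (unfold s, M; field; lra).
  assert (HM : M <= L).
  { unfold M. apply div_le_of. lra. nra. }
  assert (HM0 : 0 <= M).
  { unfold M. apply le_div_of. lra. nra. }
  assert (Hdn : dnorm ((t0 - s) * INR vn) = M).
  { replace ((t0 - s) * INR vn) with (IZR (z - 1) + (1 - M)) by (rewrite minus_IZR; lra).
    rewrite dnorm_shift by lra. unfold Rmin; destruct Rle_dec; lra. }
  rewrite Hdn. assert (M <= mint v k (t0 - s)).
  { apply mint_ge. lra. intros i Hi. destruct i; [lia|]. apply HC; auto; lia. }
  unfold Rmin; destruct Rle_dec; lra.
Qed.

Lemma L_pos v k L : (1 <= k)%nat ->
  (forall i, (1 <= i <= k)%nat -> (0 < v i)%nat) ->
  (forall i j, (1 <= i)%nat -> (i < j)%nat -> (j <= k)%nat -> (v i < v j)%nat) ->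
  is_ML v k L -> 0 < L <= 1/2.
Proof.
  intros Hk Hpos Hmono HML. destruct (L_bounds v k L Hk Hpos Hmono HML) as [H1 H2].
  assert (0 < INR (v k)) by (apply lt_0_INR; apply Hpos; lia).
  assert (0 < 1 / (2 * INR (v k))) by (apply Rdiv_lt_0_compat; lra). lra.
Qed.

Lemma lower v k L mu D : (1 <= k)%nat ->
  (forall i, (1 <= i <= k)%nat -> (0 < v i)%nat) ->
  (forall i j, (1 <= i)%nat -> (i < j)%nat -> (j <= k)%nat -> (v i < v j)%nat) ->
  is_ML v k L -> is_mu v k L mu -> is_lcm_denoms v k L D ->
  exists C, forall vn, (C <= vn)%nat -> Nat.divide D vn ->
    exists t, Rmin (mint v k t) (dnorm (t * INR vn)) = INR vn * L / (INR vn + INR (v mu)).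
Proof.
  intros Hk Hpos Hmono HML [[t1 [HT Hmin]] _] HD.
  pose proof (L_pos v k L Hk Hpos Hmono HML) as HL.
  destruct HML as [_ Hmax].
  assert (Ht1 : mint v k t1 = L) by (apply inT_mint; auto; lra).
  destruct (rho_props v k L t1 HL Hpos Hmax Ht1) as [Hr [Hrm Hrno]].
  destruct (lam_props v k L t1 HL Hpos Hmax Ht1) as [Hl [Hlm Hlno]].
  set (r := rho v k L t1) in *. set (l := lam v k L t1) in *.
  assert (Hd : forall i, (1 <= i <= k)%nat -> L <= dnorm (t1 * INR (v i))).
  { intros i Hi. rewrite <- Ht1. apply mint_le; auto. }
  destruct (Nat.le_gt_cases r l) as [Hrl|Hrl].
  - rewrite <- Hmin, Nat.min_l by lia.
    destruct (lower_core v k L t1 r Hpos HL Hr Hd) as [C HC].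
    { intros i Hi Hlt. apply Hrno. split; [|lia].
      destruct (Nat.le_gt_cases i r) as [Hir|Hir]; auto.
      pose proof (mono_le v k i r Hmono ltac:(lia) Hir ltac:(lia)). lia. }
    exists C. intros vn Hvn Hdv. eexists. apply HC; auto.
    apply (Tpoint_int v k L D t1 vn HL Hpos Hmax HD HT Hdv).
  - rewrite <- Hmin, Nat.min_r by lia.
    destruct (lower_core v k L (- t1) l Hpos HL Hl) as [C HC].
    { intros i Hi. replace (- t1 * INR (v i)) with (- (t1 * INR (v i))) by ring.
      rewrite dnorm_opp. auto. }
    { intros i Hi Hlt [m Hm]. apply (Hlno i).
      split; [|lia]. destruct (Nat.le_gt_cases i l) as [Hil|Hil]; auto.
      pose proof (mono_le v k i l Hmono ltac:(lia) Hil ltac:(lia)). lia.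
      exists (- m - 1)%Z. rewrite minus_IZR, opp_IZR. lra. }
    exists C. intros vn Hvn Hdv.
    destruct (Tpoint_int v k L D t1 vn HL Hpos Hmax HD HT Hdv) as [z Hz].
    specialize (HC vn Hvn ltac:(exists (- z)%Z; rewrite opp_IZR; lra)).
    set (s := L / (INR vn + INR (v l))) in *.
    exists (- (- t1 - s)). rewrite mint_opp.
    replace (- (- t1 - s) * INR vn) with (- ((- t1 - s) * INR vn)) by ring.
    rewrite dnorm_opp. auto.
Qed.

Lemma cells (Pn : R) N : 0 < Pn -> forall t, 0 <= t <= INR (S N) / Pn ->
  exists j, (j <= N)%nat /\ INR j / Pn <= t <= (INR j + 1) / Pn.
Proof.
  intros HP. induction N; intros t Ht.
  - exists 0%nat. split; auto. simpl in *. unfold Rdiv in *. lra.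
  - destruct (Rle_lt_dec t (INR (S N) / Pn)) as [H|H].
    + destruct (IHN t) as [j [Hj Hj2]]. lra. exists j. split; auto.
    + exists (S N). split; auto. rewrite <- S_INR. lra.
Qed.

Lemma upper v k L mu D : (1 <= k)%nat ->
  (forall i, (1 <= i <= k)%nat -> (0 < v i)%nat) ->
  (forall i j, (1 <= i)%nat -> (i < j)%nat -> (j <= k)%nat -> (v i < v j)%nat) ->
  is_ML v k L -> is_mu v k L mu -> is_lcm_denoms v k L D ->
  exists C, forall vn, (C <= vn)%nat -> Nat.divide D vn ->
    forall t, Rmin (mint v k t) (dnorm (t * INR vn)) <= INR vn * L / (INR vn + INR (v mu)).
Proof.
  intros Hk Hpos Hmono HML [[t1 [HT1 Hmin]] Hmu2] HD.
  pose proof (L_pos v k L Hk Hpos Hmono HML) as HL.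
  pose proof (L_bounds v k L Hk Hpos Hmono HML) as [HLV _].
  destruct HML as [_ Hmax].
  assert (Hmur : (1 <= mu <= k)%nat).
  { assert (Ht1 : mint v k t1 = L) by (apply inT_mint; auto; lra).
    destruct (rho_props v k L t1 HL Hpos Hmax Ht1) as [Hr _].
    destruct (lam_props v k L t1 HL Hpos Hmax Ht1) as [Hl _]. lia. }
  assert (Hvmu : 0 < INR (v mu)) by (apply lt_0_INR; apply Hpos; lia).
  set (V := INR (v k)).
  assert (HV : 1 <= V) by (unfold V; apply (le_INR 1); apply Hpos; lia).
  set (Pnat := (2 * v k * v k)%nat).
  set (Pn := INR Pnat).
  assert (HPn : Pn = 2 * V * V) by (unfold Pn, Pnat, V; rewrite !mult_INR; simpl; ring).
  assert (HPpos : 0 < Pn) by nra.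
  assert (Hw : forall i x, (1 <= i <= k)%nat -> 0 <= x <= 1 / Pn -> x * INR (v i) <= L).
  { intros i x Hi Hx. assert (Hvi : INR (v i) <= V) by (apply le_INR; apply (mono_le v k); auto; lia).
    assert (0 <= INR (v i)) by apply pos_INR.
    apply Rle_trans with (1 / Pn * V). nra.
    replace (1 / Pn * V) with (1 / (2 * V)) by (rewrite HPn; field; lra). auto. }
  destruct (comb_nat (fun j vn => Nat.divide D vn -> forall t, INR j / Pn <= t <= (INR j + 1) / Pn ->
     Rmin (mint v k t) (dnorm (t * INR vn)) <= INR vn * L / (INR vn + INR (v mu))) Pnat) as [C HC].
  { intros j Hj.
    assert (Hab : INR j / Pn <= (INR j + 1) / Pn) by (unfold Rdiv; pose proof (Rinv_0_lt_compat _ HPpos); nra).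
    destruct (continuity_ab_maj (mint v k) _ _ Hab (fun c _ => mint_cont v k c)) as [Mx [HMx HMxr]].
    destruct (Rlt_le_dec (mint v k Mx) L) as [Hgap|Heq].
    - set (g := L - mint v k Mx).
      destruct (nat_above (L * INR (v mu) / g)) as [C HC]. exists C. intros vn Hvn _ t Ht.
      specialize (HC vn Hvn). pose proof (pos_INR vn).
      eapply Rle_trans. apply Rmin_l. eapply Rle_trans. apply HMx; auto.
      assert (L * INR (v mu) <= INR vn * g).
      { apply (Rmult_le_compat_r g) in HC; [|unfold g; lra]. unfold Rdiv in HC.
        rewrite Rmult_assoc, Rinv_l in HC by (unfold g; lra). lra. }
      apply le_div_of. lra. unfold g in H0. nra.
    - assert (HMxL : mint v k Mx = L) by (apply Rle_antisym; auto).
      assert (HMx1 : Mx < 1).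
      { destruct (Rlt_le_dec Mx 1) as [?|H1]; auto. exfalso.
        assert (Mx <= 1).
        { destruct HMxr as [_ HMxr]. apply Rle_trans with ((INR j + 1) / Pn); auto.
          apply div_le_of; auto. rewrite Rmult_1_l. unfold Pn. rewrite <- S_INR. apply le_INR. lia. }
        assert (Mx = 1) by lra. subst Mx.
        pose proof (mint_le v k 1 1 ltac:(lia)). rewrite Rmult_1_l, INR_IZR_INZ, dnorm_int in H0. lra. }
      assert (HTM : inT v k L Mx).
      { split. split; [|auto]. destruct HMxr as [HMxr _]. eapply Rle_trans; [|apply HMxr].
        unfold Rdiv. apply Rmult_le_pos. apply pos_INR. left; apply Rinv_0_lt_compat; auto.
        intros i Hi. rewrite <- HMxL. apply mint_le; auto. }
      exists 0%nat. intros vn _ Hdv t Ht. pose proof (pos_INR vn).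
      destruct (Tpoint_int v k L D Mx vn HL Hpos Hmax HD HTM Hdv) as [z Hz].
      destruct (rho_props v k L Mx HL Hpos Hmax HMxL) as [Hr [[I1 HI1] _]].
      destruct (lam_props v k L Mx HL Hpos Hmax HMxL) as [Hl [[I2 HI2] _]].
      specialize (Hmu2 Mx HTM).
      set (r := rho v k L Mx) in *. set (l := lam v k L Mx) in *.
      assert (Hvr : INR (v mu) <= INR (v r)) by (apply le_INR; apply (mono_le v k); auto; lia).
      assert (Hvl : INR (v mu) <= INR (v l)) by (apply le_INR; apply (mono_le v k); auto; lia).
      assert (Hxw : Rabs (t - Mx) <= 1 / Pn).
      { destruct Ht as [Ht1' Ht2']. destruct HMxr as [HM1 HM2].
        replace (1 / Pn) with ((INR j + 1) / Pn - INR j / Pn) by (field; lra).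
        unfold Rabs; destruct Rcase_abs; lra. }
      destruct (Rle_lt_dec t Mx) as [Htm|Htm].
      + rewrite Rabs_left1 in Hxw by lra.
        eapply Rle_trans; [|apply (M_mono (INR vn) L _ _ H ltac:(lra) (conj Hvmu Hvr))].
        apply (local_up _ _ (Mx - t)); auto. apply lt_0_INR; apply Hpos; lia. lra. lra.
        apply Hw; auto; lra.
        eapply Rle_trans. apply mint_le. exact Hr. eapply Rle_trans. apply (dnorm_le _ I1).
        right. f_equal. lra.
        eapply Rle_trans. apply (dnorm_le _ z). rewrite Rabs_left1 by nra. nra.
      + rewrite Rabs_right in Hxw by lra.
        eapply Rle_trans; [|apply (M_mono (INR vn) L _ _ H ltac:(lra) (conj Hvmu Hvl))].
        apply (local_up _ _ (t - Mx)); auto. apply lt_0_INR; apply Hpos; lia. lra. lra.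
        apply Hw; auto; lra.
        eapply Rle_trans. apply mint_le. exact Hl. eapply Rle_trans. apply (dnorm_le _ (I2 + 1)).
        rewrite plus_IZR. right. rewrite <- Rabs_Ropp. f_equal. rewrite Rmult_minus_distr_r. lra.
        eapply Rle_trans. apply (dnorm_le _ z). rewrite Rabs_right by nra. nra. }
  exists C. intros vn Hvn Hdv t.
  set (I0 := Int_part t). set (t' := t - IZR I0).
  assert (Ht' : 0 <= t' < 1).
  { pose proof (Int_part_bnd t) as HH. fold I0 in HH. unfold t'. lra. }
  destruct (cells Pn (Pnat - 1) HPpos t') as [j [Hj Hjt]].
  { replace (INR (S (Pnat - 1))) with Pn. split; [lra|]. unfold Rdiv. rewrite Rinv_r; lra.
    unfold Pn. f_equal. unfold Pnat. assert (0 < v k)%nat by (apply Hpos; lia). nia. }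
  assert (E1 : mint v k t = mint v k t').
  { replace t with (t' + IZR I0) at 1 by (unfold t'; ring). apply mint_shift. }
  assert (E2 : dnorm (t * INR vn) = dnorm (t' * INR vn)).
  { replace (t * INR vn) with (t' * INR vn + IZR (I0 * Z.of_nat vn))
      by (unfold t'; rewrite mult_IZR, <- INR_IZR_INZ; ring).
    apply dnorm_int_shift. }
  rewrite E1, E2. apply (HC vn Hvn j); auto.
  assert (0 < Pnat)%nat by (unfold Pn in HPpos; apply INR_lt; simpl; lra). lia.
Qed.

Theorem lemma9p4 (n : nat) (v : nat -> nat) (L : R) :
  (2 <= n)%nat ->
  (forall i, (1 <= i <= n - 1)%nat -> (0 < v i)%nat) ->
  (forall i j, (1 <= i)%nat -> (i < j)%nat -> (j <= n - 1)%nat -> (v i < v j)%nat) ->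
  is_ML v (n - 1) L ->
  forall mu D : nat,
    is_mu v (n - 1) L mu ->
    is_lcm_denoms v (n - 1) L D ->
    exists C : nat, forall vn : nat,
      (C <= vn)%nat -> Nat.divide D vn ->
      is_ML (vext v n vn) n (INR vn * L / (INR vn + INR (v mu))).
Proof.
  intros Hn Hpos Hmono HML mu D Hmu HD.
  assert (Hk : (1 <= n - 1)%nat) by lia.
  destruct (lower v (n - 1) L mu D Hk Hpos Hmono HML Hmu HD) as [C1 H1].
  destruct (upper v (n - 1) L mu D Hk Hpos Hmono HML Hmu HD) as [C2 H2].
  exists (Nat.max C1 C2). intros vn Hvn Hdv. split.
  - destruct (H1 vn ltac:(lia) Hdv) as [t Ht]. exists t.
    rewrite mint_vext by lia. auto.
  - intros t. rewrite mint_vext by lia. apply H2; auto; lia.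
Qed.
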